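(* Let $p$ be a positive multiple of $4$ and let $q \ge 8$ be a power of two. Let $k = pq/2$. Then there exists a perfect coloring of the $p \times q$ toroidal grid with the color set $\{0,1,\ldots,k-1\}$, i.e. a coloring in which every color appears exactly twice and, for every color $c$, the $8$ neighbors of $c$ (four neighbors at each of its two occurrences) are pairwise distinct colors.
   Context: Rows of the $p\times q$ grid are indexed $0,\ldots,p-1$ and columns $0,\ldots,q-1$. The grid is treated as toroidal: the north, south, west and east neighbors of position $(x,y)$ are the positions $(x-1 \bmod p, y)$, $(x+1 \bmod p, y)$, $(x, y-1 \bmod q)$, $(x, y+1 \bmod q)$. A coloring assigns a color to each grid position. If every color appears exactly $f$ times, then each color $c$ has $4f$ neighbors in total, namely the colors at the four neighboring positions of each of the $f$ positions colored $c$ (counted as a list of $4f$ entries). The coloring is called perfect if every color appears the same number $f$ of times and, for every color $c$, these $4f$ neighbor colors are pairwise distinct. *)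

(* Defs.v *)
From mathcomp Require Import all_boot.
Set Implicit Arguments. Unset Strict Implicit. Unset Printing Implicit Defensive.

(* Toroidal p x q grid; positions (x,y) with x : 'I_p (row), y : 'I_q (column). *)

Definition coloring (p q k : nat) := 'I_p -> 'I_q -> 'I_k.

Definition nbr_colors p q k (col : coloring p q k) (x : 'I_p) (y : 'I_q)
  : seq 'I_k :=
  [:: col (ord_pred x) y; col (ordS x) y; col x (ord_pred y); col x (ordS y)].

Definition occ p q k (col : coloring p q k) (c : 'I_k) : nat :=
  #|[set xy : 'I_p * 'I_q | col xy.1 xy.2 == c]|.

Definition nbr_list p q k (col : coloring p q k) (c : 'I_k) : seq 'I_k :=
  flatten [seq nbr_colors col xy.1 xy.2 |
             xy <- enum [set xy : 'I_p * 'I_q | col xy.1 xy.2 == c]].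

Definition perfect_with p q k (f : nat) (col : coloring p q k) : Prop :=
  (forall c : 'I_k, occ col c = f) /\ (forall c : 'I_k, uniq (nbr_list col c)).

Definition perfect p q k (col : coloring p q k) : Prop :=
  exists f, perfect_with f col.

(* Main.v *)
Require Import Defs.
From mathcomp Require Import all_boot zify.

Definition rows : seq (seq nat) :=
  [:: [:: 0;1;2;0;3;1;4;5]; [:: 4;6;5;7;2;8;3;9];
      [:: 7;8;10;6;9;11;12;13]; [:: 12;14;11;15;14;13;10;15]].
Definition T (u v : nat) : nat := nth 0 (nth [::] rows u) v.
Definition A1u (s : nat) := nth 0 [:: 0;0;0;0;0;0;1;1;1;1;2;2;2;2;3;3] s.
Definition A1v (s : nat) := nth 0 [:: 0;1;2;4;6;7;1;3;5;7;2;5;6;7;1;3] s.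
Definition A2u (s : nat) := nth 0 [:: 0;0;1;1;1;1;2;2;2;2;3;3;3;3;3;3] s.
Definition A2v (s : nat) := nth 0 [:: 3;5;4;6;0;2;3;0;1;4;6;2;0;5;4;7] s.
Definition sp u := (u + 3) %% 4.
Definition ss u := u.+1 %% 4.
Definition vp v := (v + 7) %% 8.
Definition vs v := v.+1 %% 8.
Definition small_nb (u v : nat) : seq nat :=
  [:: T (sp u) v; T (ss u) v; T u (vp v); T u (vs v)].

Lemma F1 u v : u < 4 -> v < 8 -> T u v < 16.
Proof.
have H : all (fun u => all (fun v => T u v < 16) (iota 0 8)) (iota 0 4) by [].
move=> hu hv; move/allP: H => /(_ u); rewrite mem_iota hu => /(_ isT) /allP.
by move/(_ v); rewrite mem_iota hv; apply.
Qed.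

Lemma F2 s : s < 16 ->
  T (A1u s) (A1v s) = s /\ T (A2u s) (A2v s) = s /\ A1u s < 4 /\ A2u s < 4 /\
   A1v s < 8 /\ A2v s < 8 /\ (A1u s, A1v s) != (A2u s, A2v s).
Proof.
have H : all (fun s => (T (A1u s) (A1v s) == s) && (T (A2u s) (A2v s) == s) &&
   (A1u s < 4) && (A2u s < 4) && (A1v s < 8) && (A2v s < 8) && ((A1u s, A1v s) != (A2u s, A2v s)))
   (iota 0 16) by [].
move=> hs; move/allP: H => /(_ s); rewrite mem_iota hs => /(_ isT).
by do ![case/andP] => /eqP -> /eqP -> -> -> -> -> ->.
Qed.

Lemma F3 u v : u < 4 -> v < 8 ->
  (u, v) = (A1u (T u v), A1v (T u v)) \/ (u, v) = (A2u (T u v), A2v (T u v)).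
Proof.
have H : all (fun u => all (fun v => ((u, v) == (A1u (T u v), A1v (T u v))) ||
   ((u, v) == (A2u (T u v), A2v (T u v)))) (iota 0 8)) (iota 0 4) by [].
move=> hu hv; move/allP: H => /(_ u); rewrite mem_iota hu => /(_ isT) /allP.
move/(_ v); rewrite mem_iota hv => /(_ isT) /orP [] /eqP; tauto.
Qed.

Lemma F4 s : s < 16 ->
  uniq (small_nb (A1u s) (A1v s) ++ small_nb (A2u s) (A2v s)).
Proof.
have H : all (fun s => uniq (small_nb (A1u s) (A1v s) ++ small_nb (A2u s) (A2v s)))
   (iota 0 16) by [].
by move=> hs; move/allP: H => /(_ s); rewrite mem_iota hs; apply.
Qed.

Lemma pred_mod4 p (x : 'I_p) : 4 %| p -> val (ord_pred x) %% 4 = sp (x %% 4).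
Proof.
move=> h; rewrite /= (modn_dvdm _ h) /sp.
have := ltn_ord x; lia.
Qed.
Lemma succ_mod4 p (x : 'I_p) : 4 %| p -> val (ordS x) %% 4 = ss (x %% 4).
Proof. move=> h; rewrite /= (modn_dvdm _ h) /ss; lia. Qed.
Lemma pred_mod8 p (x : 'I_p) : 8 %| p -> val (ord_pred x) %% 8 = vp (x %% 8).
Proof.
move=> h; rewrite /= (modn_dvdm _ h) /vp.
have := ltn_ord x; lia.
Qed.
Lemma succ_mod8 p (x : 'I_p) : 8 %| p -> val (ordS x) %% 8 = vs (x %% 8).
Proof. move=> h; rewrite /= (modn_dvdm _ h) /vs; lia. Qed.

Definition mk k (k0 : 0 < k) (n : nat) : 'I_k := insubd (Ordinal k0) n.

Lemma main (a b p q k : nat) : 0 < a -> 0 < b -> p = 4 * a -> q = 8 * b ->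
  k = 16 * a * b -> exists col : coloring p q k, perfect_with 2 col.
Proof.
move=> a0 b0 hp hq hk.
have k0 : 0 < k by rewrite hk !muln_gt0 a0 b0.
have d4 : 4 %| p by rewrite hp dvdn_mulr.
have d8 : 8 %| q by rewrite hq dvdn_mulr.
pose C (x y : nat) := T (x %% 4) (y %% 8) + 16 * ((x %/ 4) * b + y %/ 8).
pose col : coloring p q k := fun x y => @mk k k0 (C x y).
have Cmod x y : C x y %% 16 = T (x %% 4) (y %% 8).
  have := @F1 _ _ (ltn_pmod x (isT : 0 < 4)) (ltn_pmod y (isT : 0 < 8)).
  rewrite /C; lia.
have Cdiv x y : C x y %/ 16 = (x %/ 4) * b + y %/ 8.
  have := @F1 _ _ (ltn_pmod x (isT : 0 < 4)) (ltn_pmod y (isT : 0 < 8)).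
  rewrite /C; lia.
have Cval (x : 'I_p) (y : 'I_q) : val (col x y) = C x y.
  rewrite /col /mk val_insubd; case: ifP => // /negbT; rewrite -leqNgt.
  have xa : x %/ 4 < a by rewrite ltn_divLR // mulnC -hp.
  have yb : y %/ 8 < b by rewrite ltn_divLR // mulnC -hq.
  have T16 := @F1 _ _ (ltn_pmod x (isT : 0 < 4)) (ltn_pmod y (isT : 0 < 8)).
  have : (x %/ 4) * b + y %/ 8 < a * b.
    apply: (@leq_trans ((x %/ 4) * b + b)); first by rewrite ltn_add2l.
    by rewrite -[X in _ + X]mul1n -mulnDl leq_mul2r addn1 xa orbT.
  move=> h1 h2; exfalso; rewrite hk -mulnA in h2; move: h1 h2; rewrite /C; lia.
have nbmap (x : 'I_p) (y : 'I_q) :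
    map (fun c : 'I_k => val c %% 16) (nbr_colors col x y) = small_nb (x %% 4) (y %% 8).
  by rewrite /nbr_colors /= !Cval !Cmod pred_mod4 // succ_mod4 // pred_mod8 // succ_mod8.
exists col.
have key (c : 'I_k) : exists P1 P2 : 'I_p * 'I_q,
   [/\ P1 != P2, [set xy : 'I_p * 'I_q | col xy.1 xy.2 == c] = [set P1; P2] &
    uniq (nbr_colors col P1.1 P1.2 ++ nbr_colors col P2.1 P2.2)].
  set s := c %% 16; set B := c %/ 16; set i := B %/ b; set j := B %% b.
  have s16 : s < 16 by rewrite ltn_mod.
  have [h1 [h2 [u1 [u2 [v1 [v2 hne]]]]]] := @F2 _ s16.
  have Bab : B < a * b.
    rewrite /B ltn_divLR // mulnC mulnA -hk; exact: ltn_ord.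
  have ia : i < a by rewrite /i ltn_divLR.
  have jb : j < b by rewrite /j ltn_mod.
  have X1p : 4 * i + A1u s < p by rewrite hp; lia.
  have X2p : 4 * i + A2u s < p by rewrite hp; lia.
  have Y1q : 8 * j + A1v s < q by rewrite hq; lia.
  have Y2q : 8 * j + A2v s < q by rewrite hq; lia.
  exists (Ordinal X1p, Ordinal Y1q), (Ordinal X2p, Ordinal Y2q).
  have m1 : (4 * i + A1u s) %% 4 = A1u s by lia.
  have m2 : (4 * i + A2u s) %% 4 = A2u s by lia.
  have m3 : (8 * j + A1v s) %% 8 = A1v s by lia.
  have m4 : (8 * j + A2v s) %% 8 = A2v s by lia.
  have d1 : (4 * i + A1u s) %/ 4 = i by lia.
  have d2 : (4 * i + A2u s) %/ 4 = i by lia.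
  have d3 : (8 * j + A1v s) %/ 8 = j by lia.
  have d4' : (8 * j + A2v s) %/ 8 = j by lia.
  split.
  - move: hne; rewrite !xpair_eqE -!val_eqE /= !eqn_add2l; done.
  - apply/setP => -[x y]; rewrite !inE /= -val_eqE Cval !xpair_eqE -!val_eqE /=.
    apply/idP/idP.
    + move/eqP => hc.
      have hT : T (x %% 4) (y %% 8) = s by rewrite /s -hc Cmod.
      have hB : (x %/ 4) * b + y %/ 8 = B by rewrite /B -hc Cdiv.
      have yb : y %/ 8 < b by rewrite ltn_divLR // mulnC -hq.
      have hi : x %/ 4 = i.
        by rewrite /i -hB divnMDl // (divn_small yb) addn0.
      have hj : y %/ 8 = j by rewrite /j -hB modnMDl modn_small.
      case: (@F3 _ _ (ltn_pmod x (isT : 0 < 4)) (ltn_pmod y (isT : 0 < 8)));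
        rewrite hT => -[e1 e2]; [apply/orP; left | apply/orP; right];
        apply/andP; split; apply/eqP; lia.
    + case/orP => /andP [/eqP -> /eqP ->]; apply/eqP; rewrite /C.
      * rewrite m1 m3 d1 d3 h1 /i /j -divn_eq /s /B; lia.
      * rewrite m2 m4 d2 d4' h2 /i /j -divn_eq /s /B; lia.
  - apply: (@map_uniq _ _ (fun c : 'I_k => val c %% 16)).
    rewrite map_cat !nbmap /= m1 m2 m3 m4; exact: F4.
split => c; have [P1 [P2 [hne hset huniq]]] := key c.
- by rewrite /occ hset cards2 hne.
- rewrite /nbr_list hset.
  have pe : perm_eq (enum [set P1; P2]) [:: P1; P2].
    apply: uniq_perm; first exact: enum_uniq.
      by rewrite /= inE hne.
    by move=> z; rewrite mem_enum !inE.
  by rewrite (perm_uniq (perm_flatten (perm_map _ pe))); exact: huniq.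
Qed.


Theorem lemma1 (p q : nat) :
  0 < p -> 4 %| p -> 8 <= q -> (exists e, q = 2 ^ e) ->
  exists col : coloring p q (p * q %/ 2), perfect col /\ perfect_with 2 col.
Proof.
move=> p0 d4 q8 [e he].
have d8 : 8 %| q.
  have e3 : 3 <= e.
    rewrite leqNgt; apply/negP => h; move: q8; rewrite he.
    by case: e h {he} => [|[|[|]]].
  by rewrite he -(subnKC e3) expnD dvdn_mulr.
have [a ha] : exists a, p = 4 * a by exists (p %/ 4); lia.
have [b hb] : exists b, q = 8 * b by exists (q %/ 8); lia.
have := @main a b p q (p * q %/ 2).
case; try lia.
- move=> col hc; exists col; split => //; exists 2; exact: hc.
Qed.
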